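(* Let $Q$ be an $n$-dimensional manifold, $k\ge 1$, and let $L:\mathbb{R}^k\times T^1_kQ\to\mathbb{R}$ be a smooth Lagrangian, written in local coordinates as $L(x^\mu,q^i,q^i_\mu)$. Let $\widetilde L:\mathbb{R}^k\times T^1_kTQ\to\mathbb{R}$ be the prolonged Lagrangian, given in the induced coordinates $(x^\mu,q^i,v^i,q^i_\mu,v^i_\mu)$ by $$\widetilde{L}(x^{\mu},q^i,v^{i},q^i_{\mu},v^{i}_{\mu})=\frac{\partial L}{\partial q^{i}}(x^{\mu},q^i,q^i_{\mu})\,v^{i}+\frac{\partial L}{\partial q^i_{\mu}}(x^{\mu},q^i,q^i_{\mu})\,v^i_{\mu}$$ (summation over repeated indices). Then: (1) For a map $\psi:U\subset\mathbb{R}^k\to TQ$, $\psi(\mathbf{x})=(q^i(\mathbf{x}),v^i(\mathbf{x}))$, with $q^i_\mu=\partial q^i/\partial x^\mu$ and $v^i_\mu=\partial v^i/\partial x^\mu$ evaluated along $\psi$, the Euler–Lagrange field equations of $\widetilde L$, $$\sum_\mu\frac{d}{dx^{\mu}}\Big(\frac{\partial \widetilde L}{\partial q^i_{\mu}}\Big)-\frac{\partial \widetilde L}{\partial q^i}=0,\qquad \sum_\mu\frac{d}{dx^{\mu}}\Big(\frac{\partial \widetilde L}{\partial v^i_{\mu}}\Big)-\frac{\partial \widetilde L}{\partial v^i}=0,\qquad 1\le i\le n,$$ are equivalent to the system $$\sum_\mu\frac{d}{dx^{\mu}}\Big[\frac{\partial^2 L}{\partial q^j\partial q^i_{\mu}}v^j+\frac{\partial^2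 L}{\partial q^j_{\gamma}\partial q^i_{\mu}}v^j_{\gamma}\Big]-\frac{\partial^2 L}{\partial q^i\partial q^j}v^j-\frac{\partial^2 L}{\partial q^i\partial q^j_{\gamma}}v^j_{\gamma}=0,\qquad \sum_\mu\frac{d}{dx^{\mu}}\Big(\frac{\partial L}{\partial q^i_{\mu}}\Big)-\frac{\partial L}{\partial q^i}=0,$$ i.e. the Jacobi field equations for $L$ together with the Euler–Lagrange field equations for $L$. (2) If $L$ is regular, then $\widetilde L$ is regular.
   Context: $T^1_kQ=TQ\oplus\cdots\oplus TQ$ ($k$ copies) is the bundle of $k^1$-velocities of $Q$, with local coordinates $(q^i,q^i_\mu)$, $1\le i\le n$, $1\le\mu\le k$, where $q^i_\mu$ are the components of the $\mu$-th tangent vector; $\mathbb{R}^k$ has coordinates $\mathbf{x}=(x^1,\dots,x^k)$. Similarly $T^1_kTQ$ is the bundle of $k^1$-velocities of the manifold $TQ$, with induced coordinates $(q^i,v^i,q^i_\mu,v^i_\mu)$ where $(q^i,v^i)$ are coordinates on $TQ$. The operator $\frac{d}{dx^\mu}$ denotes the total derivative along the field. A Lagrangian $L$ on $\mathbb{R}^k\times T^1_kQ$ is called regular if the matrix $\big(\frac{\partial^2 L}{\partial q^i_\mu\partial q^j_\nu}\big)$ (rows indexed by $(i,\mu)$, columns by $(j,\nu)$) is nonsingular at every point; regularity of $\widetilde L$ means nonsingularity of its Hessian with respect to all the velocity variables $(q^i_\mu,v^i_\mu)$. *)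

(* Defs.v *)
From HB Require Import structures.
From mathcomp Require Import all_boot all_order all_algebra.
From mathcomp Require Import all_classical all_reals all_analysis.
Set Implicit Arguments. Unset Strict Implicit. Unset Printing Implicit Defensive.
Import Order.TTheory GRing.Theory Num.Theory.
Import numFieldNormedType.Exports.
Local Open Scope classical_set_scope.
Local Open Scope ring_scope.

Section Defs.
Variable R : realType.

Fixpoint iderive (V W : normedModType R) (vs : seq V) (f : V -> W) : V -> W :=
  match vs with
  | [::] => f
  | v :: vs' => iderive vs' ('D_v f)
  end.

Definition smooth (V W : normedModType R) (f : V -> W) : Prop :=
  forall (vs : seq V) (p : V), differentiable (iderive vs f) p.

Definition smooth_on (V W : normedModType R) (U : set V) (f : V -> W) : Prop :=
  forall (vs : seq V) (p : V), U p -> differentiable (iderive vs f) p.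

(* Local coordinates on R^k x T^1_k M, M of dimension m:
   a point is ((x, q), qd) with x^mu = x 0 mu, q^i = q 0 i, q^i_mu = qd i mu. *)
Definition Jet (k m : nat) := (('rV[R]_k * 'rV[R]_m) * 'M[R]_(m, k))%type.

Definition ex (k m : nat) (mu : 'I_k) : Jet k m := ((delta_mx 0 mu, 0), 0).
Definition eq_ (k m : nat) (i : 'I_m) : Jet k m := ((0, delta_mx 0 i), 0).
Definition eqd (k m : nat) (i : 'I_m) (mu : 'I_k) : Jet k m := ((0, 0), delta_mx i mu).

Definition dq (k m : nat) (F : Jet k m -> R) (i : 'I_m) : Jet k m -> R :=
  'D_(eq_ k i) F.
Definition dqd (k m : nat) (F : Jet k m -> R) (i : 'I_m) (mu : 'I_k) : Jet k m -> R :=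
  'D_(eqd i mu) F.

(* Coordinates on TQ are
   (q, v) in 'rV_(n + n): q^i = index lshift n i, v^i = index rshift n i;
   velocities: q^i_mu = row (lshift n i), v^i_mu = row (rshift n i). *)
Definition Ltilde (k n : nat) (L : Jet k n -> R) (p : Jet k (n + n)) : R :=
  let x := p.1.1 in let w := p.1.2 in let W := p.2 in
  let q := lsubmx w in let v := rsubmx w in
  let qd := usubmx W in let vd := dsubmx W in
  let pL := ((x, q), qd) in
  \sum_(i < n) dq L i pL * v 0 i
  + \sum_(i < n) \sum_(mu < k) dqd L i mu pL * vd i mu.

(* Regularity: the Hessian with respect to all velocity variables q^i_mu,
   rows indexed by (i,mu), columns by (j,nu) (pairs enumerated via the
   standard bijection 'I_m * 'I_k ~ 'I_(m*k) used by mxvec), is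
   nonsingular at every point. *)
Definition unvec (m k : nat) (a : 'I_(m * k)) : 'I_m * 'I_k :=
  enum_val (cast_ord (esym (mxvec_cast m k)) a).

Definition velHessian (k m : nat) (L : Jet k m -> R) (p : Jet k m) : 'M[R]_(m * k) :=
  \matrix_(a < m * k, b < m * k)
     dqd (dqd L (unvec a).1 (unvec a).2) (unvec b).1 (unvec b).2 p.

Definition regular (k m : nat) (L : Jet k m -> R) : Prop :=
  forall p : Jet k m, velHessian L p \in unitmx.

Definition ek (k : nat) (mu : 'I_k) : 'rV[R]_k := delta_mx 0 mu.

Definition j1 (k m : nat) (phi : 'rV[R]_k -> 'rV[R]_m) (x : 'rV[R]_k) : Jet k m :=
  ((x, phi x), \matrix_(i < m, mu < k) 'D_(ek mu) (fun y => phi y 0 i) x).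

Definition dtot (k : nat) (G : 'rV[R]_k -> R) (mu : 'I_k) : 'rV[R]_k -> R :=
  'D_(ek mu) G.

Definition EL (k m : nat) (F : Jet k m -> R) (phi : 'rV[R]_k -> 'rV[R]_m)
  (i : 'I_m) (x : 'rV[R]_k) : Prop :=
  \sum_(mu < k) dtot (fun y => dqd F i mu (j1 phi y)) mu x - dq F i (j1 phi x) = 0.

Definition Jacobi (k n : nat) (L : Jet k n -> R) (q v : 'rV[R]_k -> 'rV[R]_n)
  (i : 'I_n) (x : 'rV[R]_k) : Prop :=
  let vd := fun y (j : 'I_n) (g : 'I_k) => 'D_(ek g) (fun z => v z 0 j) y in
  \sum_(mu < k) dtot (fun y =>
       \sum_(j < n) dq (dqd L i mu) j (j1 q y) * v y 0 j
     + \sum_(j < n) \sum_(g < k) dqd (dqd L i mu) j g (j1 q y) * vd y j g) mu x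
  - \sum_(j < n) dq (dq L j) i (j1 q x) * v x 0 j
  - \sum_(j < n) \sum_(g < k) dq (dqd L j g) i (j1 q x) * vd x j g = 0.

End Defs.

(* Main.v *)
Require Import Defs.
From HB Require Import structures.
From mathcomp Require Import all_boot all_order all_algebra.
From mathcomp Require Import all_classical all_reals all_analysis.
From mathcomp Require Import ring lra.
Import Order.TTheory GRing.Theory Num.Theory.
Import numFieldNormedType.Exports.
Local Open Scope classical_set_scope.
Local Open Scope ring_scope.
Section S.
Variables (R : realType) (V : normedModType R).

Lemma line_eq (f : V -> R) (a u : V) (s : R) :
  (fun h : R => h^-1 *: (((fun t : R => f (a + t *: u)) \o shift s) (h *: 1) - f (a + s *: u)))
  = (fun h : R => h^-1 *: ((f \o shift (a + s *: u)) (h *: u) - f (a + s *: u))).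
Proof.
apply/funext => h /=; congr (_ *: (f _ - _)).
by rewrite scaler1 scalerDl addrCA addrC.
Qed.

Lemma line_derive (f : V -> R) (a u : V) (s : R) :
  'D_1 (fun t : R => f (a + t *: u)) s = 'D_u f (a + s *: u).
Proof. by rewrite /derive line_eq. Qed.

Lemma line_derivable (f : V -> R) (a u : V) (s : R) :
  derivable (fun t : R => f (a + t *: u)) s 1 = derivable f (a + s *: u) u.
Proof. by rewrite /derivable line_eq. Qed.

Lemma mvt_line (g : R -> R) (h : R) : 0 < h -> (forall x, derivable g x 1) ->
  exists2 c, 0 <= c <= h & g h - g 0 = 'D_1 g c * h.
Proof.
move=> h0 dg.
have [c cI E] := @MVT R g ('D_1 g) 0 h h0 (fun x _ => derivableP (dg x))
  (derivable_within_continuous (fun x _ => dg x)).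
exists c; last by rewrite E subr0.
by move: cI; rewrite in_itv /= => /andP[/ltW -> /ltW ->].
Qed.

Lemma mixed_mvt (f : V -> R) p u v h : 0 < h ->
  (forall q, derivable f q u) -> (forall q, derivable ('D_u f) q v) ->
  exists s t, [/\ 0 <= s <= h, 0 <= t <= h &
   f (p + h*:u + h*:v) - f (p + h*:u) - f (p + h*:v) + f p
     = h ^+ 2 * 'D_v ('D_u f) (p + s*:u + t*:v)].
Proof.
move=> h0 du dvu.
pose phi := (fun t : R => f ((p + h *: v) + t *: u)) - (fun t : R => f (p + t *: u)).
have dphi x : derivable phi x 1.
  by apply: derivableB; rewrite line_derivable.
have [c cI Ec] := @mvt_line phi h h0 dphi.
have Dphi : 'D_1 phi c = 'D_u f ((p + h *: v) + c *: u) - 'D_u f (p + c *: u).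
  by rewrite deriveB ?line_derivable // !line_derive.
pose psi := (fun t : R => 'D_u f ((p + c *: u) + t *: v)).
have dpsi x : derivable psi x 1 by rewrite (line_derivable (fun q => 'D_u f q)).
have [d dI Ed] := @mvt_line psi h h0 dpsi.
exists c, d; split => //.
have E1 := line_derive ('D_u f) (p + c *: u) v d.
have Ec' : (f (p + h *: v + h *: u) - f (p + h *: u)) - (f (p + h *: v + 0 *: u) - f (p + 0 *: u))
   = ('D_u f (p + h *: v + c *: u) - 'D_u f (p + c *: u)) * h by rewrite -Dphi -Ec.
clear Ec; move: Ec' Ed; rewrite /psi E1 !scale0r !addr0 => Ec Ed.
have E2 : p + h *: v + c *: u = p + c *: u + h *: v by rewrite addrAC.
rewrite E2 Ed in Ec.
rewrite (_ : h ^+ 2 * _ = 'D_v ('D_u f) (p + c *: u + d *: v) * h * h); last by rewrite expr2 mulrC mulrA.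
rewrite -Ec.
have -> : p + h *: v + h *: u = p + h *: u + h *: v by rewrite addrAC.
by rewrite opprD opprK addrA.
Qed.

End S.

Section S.
Variables (R : realType) (V : normedModType R).

Lemma small_pt (p u v : V) (s t h d : R) : 0 <= s <= h -> 0 <= t <= h ->
  h * (`|u| + `|v|) < d -> `|p - (p + s *: u + t *: v)| < d.
Proof.
move=> /andP[s0 sh] /andP[t0 th] hd.
rewrite -addrA opprD addrA subrr add0r normrN.
apply: le_lt_trans (ler_normD _ _) _; rewrite !normrZ !ger0_norm //.
apply: le_lt_trans hd; rewrite mulrDr.
by apply: lerD; apply: ler_wpM2r.
Qed.

Lemma t2 (d X : R) : 0 < d -> 0 <= X -> d / (2 * (X + 1)) * X < d.
Proof.
move=> d0 X0.
have X1 : X + 1 != 0 by rewrite gt_eqF // ltr_wpDl.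
apply: (@le_lt_trans _ _ (d / (2 * (X + 1)) * (X + 1))).
  apply: ler_wpM2l; last lra.
  rewrite divr_ge0 // ?ltW //; lra.
rewrite invfM mulrA -mulrA mulVf // mulr1; lra.
Qed.

Lemma half_contra (a : R) : a < a / 2 + a / 2 -> False.
Proof. lra. Qed.

Lemma cont_ball (g : V -> R) p e : {for p, continuous g} -> 0 < e ->
  exists2 d, 0 < d & forall q, `|p - q| < d -> `|g p - g q| < e.
Proof.
move=> cg e0.
move/cvgrPdist_lt : cg => /(_ _ e0).
case/nbhs_ballP => d d0 Hb.
exists d => // q pq.
apply: Hb; rewrite -ball_normE; exact: pq.
Qed.

Lemma schwarz (f : V -> R) p u v :
  (forall q, derivable f q u) -> (forall q, derivable f q v) ->
  (forall q, derivable ('D_u f) q v) -> (forall q, derivable ('D_v f) q u) ->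
  {for p, continuous ('D_v ('D_u f))} -> {for p, continuous ('D_u ('D_v f))} ->
  'D_v ('D_u f) p = 'D_u ('D_v f) p.
Proof.
move=> du dv duv dvu cA cB.
apply/eqP/negPn/negP => hne.
have e0 : 0 < `|'D_v ('D_u f) p - 'D_u ('D_v f) p| / 2.
  by rewrite divr_gt0 // normr_gt0 subr_eq0.
have [d1 d10 H1] := cont_ball _ _ _ cA e0.
have [d2 d20 H2] := cont_ball _ _ _ cB e0.
set X := `|u| + `|v|.
have X0 : 0 <= X by rewrite addr_ge0.
set d := Num.min d1 d2.
have d0 : 0 < d by rewrite lt_min d10 d20.
set h := d / (2 * (X + 1)).
have h0 : 0 < h by rewrite divr_gt0 // mulr_gt0 // ltr_wpDl.
have hd : h * X < d by apply: t2.
have hd1 : h * X < d1 by apply: (lt_le_trans hd); rewrite ge_min lexx.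
have hd2 : h * (`|v| + `|u|) < d2.
  by rewrite addrC; apply: (lt_le_trans hd); rewrite ge_min lexx orbT.
have [s [t [sI tI E1]]] := mixed_mvt _ _ _ p _ _ _ h0 du duv.
have [s' [t' [sI' tI' E2]]] := mixed_mvt _ _ _ p _ _ _ h0 dv dvu.
have HA := H1 _ (small_pt p _ _ _ _ _ _ sI tI hd1).
have HB := H2 _ (small_pt p _ _ _ _ _ _ sI' tI' hd2).
have EE : 'D_v ('D_u f) (p + s *: u + t *: v) = 'D_u ('D_v f) (p + s' *: v + t' *: u).
  apply: (mulfI (_ : h ^+ 2 != 0)); first by rewrite expf_neq0 // gt_eqF.
  rewrite -E1 -E2.
  have -> : p + h *: v + h *: u = p + h *: u + h *: v by rewrite addrAC.
  by rewrite -!addrA; congr (_ + _); rewrite addrCA.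
rewrite EE in HA.
move: HA HB; set a := 'D_v ('D_u f) p; set b := 'D_u ('D_v f) p;
  set c := 'D_u ('D_v f) (p + s' *: v + t' *: u) => HA HB.
have : `|a - b| < `|a - b| / 2 + `|a - b| / 2.
  rewrite {1}(_ : a - b = (a - c) - (b - c)); last by rewrite opprB addrA subrK.

  apply: le_lt_trans (ler_normB _ _) _.

  exact: ltrD HA HB.
by move/half_contra.
Qed.
End S.

Section S2.
Variables (R : realType) (V : normedModType R).
Lemma smooth_comm (f : V -> R) (hf : smooth f) (u v : V) :
  'D_v ('D_u f) = 'D_u ('D_v f).
Proof.
apply/funext => p; apply: schwarz => [q|q|q|q||].
- exact: diff_derivable (hf [::] q).
- exact: diff_derivable (hf [::] q).
- exact: diff_derivable (hf [:: u] q).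
- exact: diff_derivable (hf [:: v] q).
- exact: differentiable_continuous (hf [:: u; v] p).
- exact: differentiable_continuous (hf [:: v; u] p).
Qed.
End S2.

Section S.
Variables (R : realType) (n k : nat).
Notation J := (Jet R k (n + n)).
Notation J0 := (Jet R k n).

Definition pr (p : J) : J0 := ((p.1.1, lsubmx p.1.2), usubmx p.2).
Definition c1 (p : J) (i : 'I_n) : R := rsubmx p.1.2 0 i.
Definition c2 (p : J) (i : 'I_n) (mu : 'I_k) : R := dsubmx p.2 i mu.

Lemma pr_lin (h : R) (e p : J) : pr (h *: e + p) = h *: pr e + pr p.
Proof. by rewrite /pr /= !linearD !linearZ. Qed.

Lemma c1_lin (h : R) (e p : J) i : c1 (h *: e + p) i = h * c1 e i + c1 p i.
Proof. by rewrite /c1 /= linearD linearZ !mxE. Qed.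

Lemma c2_lin (h : R) (e p : J) i mu : c2 (h *: e + p) i mu = h * c2 e i mu + c2 p i mu.
Proof. by rewrite /c2 /= linearD linearZ !mxE. Qed.

Lemma Ltilde_E (L : J0 -> R) (p : J) : Ltilde L p =
  \sum_(i < n) dq L i (pr p) * c1 p i + \sum_(i < n) \sum_(mu < k) dqd L i mu (pr p) * c2 p i mu.
Proof. by []. Qed.

Lemma pr_quot (G : J0 -> R) (p e : J) :
  (fun h : R => h^-1 *: (((fun q => G (pr q)) \o shift p) (h *: e) - G (pr p)))
  = (fun h : R => h^-1 *: ((G \o shift (pr p)) (h *: pr e) - G (pr p))).
Proof. by apply/funext => h /=; rewrite pr_lin. Qed.

Lemma derive_pr (G : J0 -> R) (p e : J) :
  'D_e (fun q => G (pr q)) p = 'D_(pr e) G (pr p).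
Proof. by rewrite /derive pr_quot. Qed.

Lemma derivable_pr (G : J0 -> R) (p e : J) :
  derivable (fun q => G (pr q)) p e = derivable G (pr p) (pr e).
Proof. by rewrite /derivable pr_quot. Qed.

Lemma lin_derive (c : J -> R) (hc : forall (h : R) e p, c (h *: e + p) = h * c e + c p) (p e : J) :
  derivable c p e /\ 'D_e c p = c e.
Proof.
have E : \forall h \near (0 : R)^', h^-1 *: ((c \o shift p) (h *: e) - c p) = c e.
  near=> h.
  have h0 : h != 0 by near: h; exact: nbhs_dnbhs_neq.
  by rewrite /= hc addrK [_ *: _]mulrA mulVf // mul1r.
split; first exact: is_cvg_near_cst E.
exact: lim_near_cst E.
Unshelve. all: by end_near.
Qed.

Lemma term_derivable (G : J0 -> R) (c : J -> R)
  (hc : forall (h : R) e p, c (h *: e + p) = h * c e + c p) (p e : J) :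
  derivable G (pr p) (pr e) -> derivable (fun q => G (pr q) * c q) p e.
Proof.
move=> dG; rewrite (_ : (fun q => G (pr q) * c q) = (fun q => G (pr q)) * c) //.
by apply: derivableM; [rewrite derivable_pr | exact: (lin_derive c hc p e).1].
Qed.

Lemma term_derive (G : J0 -> R) (c : J -> R)
  (hc : forall (h : R) e p, c (h *: e + p) = h * c e + c p) (p e : J) :
  derivable G (pr p) (pr e) ->
  'D_e (fun q => G (pr q) * c q) p = 'D_(pr e) G (pr p) * c p + G (pr p) * c e.
Proof.
move=> dG; rewrite (_ : (fun q => G (pr q) * c q) = (fun q => G (pr q)) * c) //.
have dc := (lin_derive c hc p e).1.
have dg : derivable (fun q => G (pr q)) p e by rewrite derivable_pr.
rewrite deriveM //.
have -> : 'D_e c p = c e by exact: (lin_derive c hc p e).2.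
have -> : 'D_e (fun q => G (pr q)) p = 'D_(pr e) G (pr p) by exact: derive_pr.
rewrite addrC; congr (_ + _); exact: mulrC.
Qed.

Lemma sum_derivable m (F : 'I_m -> J -> R) (p e : J) :
  (forall i, derivable (F i) p e) -> derivable (fun q => \sum_(i < m) F i q) p e.
Proof.
move=> dF; rewrite (_ : (fun q => \sum_(i < m) F i q) = \sum_(i < m) F i); last by rewrite fct_sumE.
exact: derivable_sum.
Qed.

Lemma sum_derive m (F : 'I_m -> J -> R) (p e : J) :
  (forall i, derivable (F i) p e) ->
  'D_e (fun q => \sum_(i < m) F i q) p = \sum_(i < m) 'D_e (F i) p.
Proof.
move=> dF; rewrite (_ : (fun q => \sum_(i < m) F i q) = \sum_(i < m) F i); last by rewrite fct_sumE.
exact: derive_sum.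
Qed.

Definition Fgen (G1 : 'I_n -> J0 -> R) (G2 : 'I_n -> 'I_k -> J0 -> R) (p : J) : R :=
  \sum_(i < n) G1 i (pr p) * c1 p i + \sum_(i < n) \sum_(mu < k) G2 i mu (pr p) * c2 p i mu.

Section Fgen.
Variables (G1 : 'I_n -> J0 -> R) (G2 : 'I_n -> 'I_k -> J0 -> R) (p e : J).
Hypothesis d1 : forall i, derivable (G1 i) (pr p) (pr e).
Hypothesis d2 : forall i mu, derivable (G2 i mu) (pr p) (pr e).

Let dT1 i : derivable (fun q => G1 i (pr q) * c1 q i) p e.
Proof. by apply: term_derivable => // *; apply: c1_lin. Qed.
Let dT2 i mu : derivable (fun q => G2 i mu (pr q) * c2 q i mu) p e.
Proof. by apply: term_derivable => // *; apply: c2_lin. Qed.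
Let dS2 i : derivable (fun q => \sum_(mu < k) G2 i mu (pr q) * c2 q i mu) p e.
Proof. exact: sum_derivable. Qed.

Lemma Fgen_derivable : derivable (Fgen G1 G2) p e.
Proof.
rewrite (_ : Fgen G1 G2 = (fun q => \sum_(i < n) G1 i (pr q) * c1 q i) +
   (fun q => \sum_(i < n) \sum_(mu < k) G2 i mu (pr q) * c2 q i mu)) //.
by apply: derivableD; apply: sum_derivable.
Qed.

Lemma Fgen_derive : 'D_e (Fgen G1 G2) p =
  \sum_(i < n) ('D_(pr e) (G1 i) (pr p) * c1 p i + G1 i (pr p) * c1 e i) +
  \sum_(i < n) \sum_(mu < k) ('D_(pr e) (G2 i mu) (pr p) * c2 p i mu + G2 i mu (pr p) * c2 e i mu).
Proof.
rewrite (_ : Fgen G1 G2 = (fun q => \sum_(i < n) G1 i (pr q) * c1 q i) +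
   (fun q => \sum_(i < n) \sum_(mu < k) G2 i mu (pr q) * c2 q i mu)) //.
rewrite deriveD; try by apply: sum_derivable.
rewrite !sum_derive //; congr (_ + _); apply: eq_bigr => i _.
  by rewrite term_derive // => *; apply: c1_lin.
rewrite sum_derive //; apply: eq_bigr => mu _.
by rewrite term_derive // => *; apply: c2_lin.
Qed.
End Fgen.

Lemma pr_eqdl i mu : pr (eqd R (lshift n i) mu) = eqd R i mu.
Proof.
rewrite /pr /eqd /= !linear0; congr (_, _).
by apply/matrixP => a b; rewrite !mxE eq_lshift.
Qed.
Lemma pr_eqdr i mu : pr (eqd R (rshift n i) mu) = 0.
Proof.
rewrite /pr /eqd /= !linear0; congr (_, _).
by apply/matrixP => a b; rewrite !mxE eq_lrshift.
Qed.
Lemma pr_eql i : pr (eq_ R k (lshift n i)) = eq_ R k i.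
Proof.
rewrite /pr /eq_ /= !linear0; congr ((_, _), _).
by apply/matrixP => a b; rewrite !mxE eq_lshift.
Qed.
Lemma pr_eqr i : pr (eq_ R k (rshift n i)) = 0.
Proof.
rewrite /pr /eq_ /= !linear0; congr ((_, _), _).
by apply/rowP => b; rewrite !mxE eq_lrshift andbF.
Qed.
Lemma c1_eqd I mu j : c1 (eqd R I mu) j = 0.
Proof. by rewrite /c1 /= linear0 mxE. Qed.
Lemma c2_eq I j g : c2 (eq_ R k I) j g = 0.
Proof. by rewrite /c2 /= linear0 mxE. Qed.
Lemma c2_eqdl i mu j g : c2 (eqd R (lshift n i) mu) j g = 0.
Proof. by rewrite /c2 /= !mxE eq_rlshift. Qed.
Lemma c2_eqdr i mu j g : c2 (eqd R (rshift n i) mu) j g = ((j == i) && (g == mu))%:R.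
Proof. by rewrite /c2 /= !mxE eq_rshift. Qed.
Lemma c1_eql i j : c1 (eq_ R k (lshift n i)) j = 0.
Proof. by rewrite /c1 /= !mxE eq_rlshift andbF. Qed.
Lemma c1_eqr i j : c1 (eq_ R k (rshift n i)) j = (j == i)%:R.
Proof. by rewrite /c1 /= !mxE eq_rshift. Qed.

Lemma sum_kron m (F : 'I_m -> R) i : \sum_(j < m) F j * (j == i)%:R = F i.
Proof.
rewrite (bigD1 i) //= eqxx mulr1 big1 ?addr0 // => j; rewrite ?andTb => ji; by rewrite (negbTE ji) mulr0.
Qed.

Lemma sum_kron2 (F : 'I_n -> 'I_k -> R) i mu :
  \sum_(j < n) \sum_(g < k) F j g * ((j == i) && (g == mu))%:R = F i mu.
Proof.
rewrite (bigD1 i) //= [X in _ + X]big1 ?addr0.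
  by rewrite eqxx; apply: sum_kron.
move=> j; rewrite ?andTb => ji; rewrite big1 // => g _; by rewrite (negbTE ji) mulr0.
Qed.
End S.

Arguments Fgen {R n k}.
Arguments pr {R n k}.
Arguments c1 {R n k}.
Arguments c2 {R n k}.
Section S.
Variables (R : realType) (n k : nat) (L : Jet R k n -> R) (hL : smooth L).
Notation J := (Jet R k (n + n)).
Notation J0 := (Jet R k n).

Lemma sm (vs : seq J0) q e : derivable (iderive vs L) q e.
Proof. exact: diff_derivable (hL vs q). Qed.

Lemma scL (u v : J0) q : 'D_v ('D_u L) q = 'D_u ('D_v L) q.
Proof. exact: (congr1 (fun F => F q) (smooth_comm _ _ _ hL u v)). Qed.

Lemma Ltilde_Fgen : Ltilde L = Fgen (fun i => dq L i) (fun i mu => dqd L i mu).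
Proof. by []. Qed.

Lemma DLl i mu : dqd (Ltilde L) (lshift n i) mu =
  Fgen (fun j => dq (dqd L i mu) j) (fun j g => dqd (dqd L i mu) j g).
Proof.
apply/funext => p; rewrite {1}/dqd Ltilde_Fgen Fgen_derive; last 2 first.
- by move=> j; exact: (sm [:: eq_ R k j]).
- by move=> j g; exact: (sm [:: eqd R j g]).
rewrite pr_eqdl /Fgen; congr (_ + _); apply: eq_bigr => j _.
  rewrite c1_eqd mulr0 addr0 /dq /dqd.
  by rewrite scL.
apply: eq_bigr => g _.
rewrite c2_eqdl mulr0 addr0 /dqd.
by rewrite scL.
Qed.

Lemma DQl i : dq (Ltilde L) (lshift n i) =
  Fgen (fun j => dq (dq L j) i) (fun j g => dq (dqd L j g) i).
Proof.
apply/funext => p; rewrite {1}/dq Ltilde_Fgen Fgen_derive; last 2 first.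
- by move=> j; exact: (sm [:: eq_ R k j]).
- by move=> j g; exact: (sm [:: eqd R j g]).
rewrite pr_eql /Fgen; congr (_ + _); apply: eq_bigr => j _.
  by rewrite c1_eql mulr0 addr0.
apply: eq_bigr => g _.
by rewrite c2_eq mulr0 addr0.
Qed.

Lemma DLr i mu : dqd (Ltilde L) (rshift n i) mu = fun p => dqd L i mu (pr p).
Proof.
apply/funext => p; rewrite {1}/dqd Ltilde_Fgen Fgen_derive; last 2 first.
- by move=> j; exact: (sm [:: eq_ R k j]).
- by move=> j g; exact: (sm [:: eqd R j g]).
rewrite pr_eqdr big1 ?add0r; last first.
  by move=> j _; rewrite derive0 mul0r add0r c1_eqd mulr0.
rewrite -[RHS](sum_kron2 _ _ _ (fun j g => dqd L j g (pr p)) i mu).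
apply: eq_bigr => j _; apply: eq_bigr => g _.
by rewrite derive0 mul0r add0r c2_eqdr.
Qed.

Lemma DQr i : dq (Ltilde L) (rshift n i) = fun p => dq L i (pr p).
Proof.
apply/funext => p; rewrite {1}/dq Ltilde_Fgen Fgen_derive; last 2 first.
- by move=> j; exact: (sm [:: eq_ R k j]).
- by move=> j g; exact: (sm [:: eqd R j g]).
rewrite pr_eqr [X in _ + X]big1 ?addr0; last first.
  move=> j _; apply: big1 => g _.
  by rewrite derive0 mul0r add0r c2_eq mulr0.
rewrite -[RHS](sum_kron _ _ (fun j => dq L j (pr p)) i).
apply: eq_bigr => j _.
by rewrite derive0 mul0r add0r c1_eqr.
Qed.

Lemma H_lr i mu j nu p :
  dqd (dqd (Ltilde L) (lshift n i) mu) (rshift n j) nu p = dqd (dqd L i mu) j nu (pr p).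
Proof.
rewrite {1}/dqd DLl Fgen_derive; last 2 first.
- by move=> j'; exact: (sm [:: eqd R i mu; eq_ R k j']).
- by move=> j' g; exact: (sm [:: eqd R i mu; eqd R j' g]).
rewrite pr_eqdr big1 ?add0r; last first.
  by move=> j' _; rewrite derive0 mul0r add0r c1_eqd mulr0.
rewrite -[RHS](sum_kron2 _ _ _ (fun j' g => dqd (dqd L i mu) j' g (pr p)) j nu).
apply: eq_bigr => j' _; apply: eq_bigr => g _.
by rewrite derive0 mul0r add0r c2_eqdr.
Qed.

Lemma H_rl i mu j nu p :
  dqd (dqd (Ltilde L) (rshift n i) mu) (lshift n j) nu p = dqd (dqd L i mu) j nu (pr p).
Proof. by rewrite {1}/dqd DLr derive_pr pr_eqdl. Qed.

Lemma H_rr i mu j nu p :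
  dqd (dqd (Ltilde L) (rshift n i) mu) (rshift n j) nu p = 0.
Proof. by rewrite {1}/dqd DLr derive_pr pr_eqdr derive0. Qed.
End S.

Arguments Fgen {R n k}.
Arguments pr {R n k}.
Arguments c1 {R n k}.
Arguments c2 {R n k}.
Section S.
Variables (R : realType) (n k : nat).
Variable psi : 'rV[R]_k -> 'rV[R]_(n + n).
Let q := fun y => lsubmx (psi y).
Let v := fun y => rsubmx (psi y).

Lemma pr_j1 y : pr (j1 psi y) = j1 q y.
Proof.
rewrite /pr /j1 /=; congr (_, _); apply/matrixP => a b; rewrite !mxE.
by congr ('D__ _ _); apply/funext => z; rewrite /q mxE.
Qed.

Lemma c1_j1 y j : c1 (j1 psi y) j = v y 0 j.
Proof. by []. Qed.

Lemma c2_j1 y j g : c2 (j1 psi y) j g = 'D_(ek R g) (fun z => v z 0 j) y.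
Proof.
rewrite /c2 /j1 /= !mxE.
by congr ('D__ _ _); apply/funext => z; rewrite /v mxE.
Qed.

Lemma Fgen_j1 G1 G2 y : Fgen G1 G2 (j1 psi y) =
  \sum_(j < n) G1 j (j1 q y) * v y 0 j +
  \sum_(j < n) \sum_(g < k) G2 j g (j1 q y) * 'D_(ek R g) (fun z => v z 0 j) y.
Proof.
rewrite /Fgen pr_j1; congr (_ + _); apply: eq_bigr => j _; apply: eq_bigr => g _.
by rewrite c2_j1.
Qed.
End S.

Section EL.
Variables (R : realType) (n k : nat) (L : Jet R k n -> R) (hL : smooth L).
Variable psi : 'rV[R]_k -> 'rV[R]_(n + n).

Lemma EL_r i x : EL (Ltilde L) psi (rshift n i) x <-> EL L (fun y => lsubmx (psi y)) i x.
Proof.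
rewrite /EL (DQr _ _ _ _ hL) pr_j1.
have E : forall mu, (fun y => dqd (Ltilde L) (rshift n i) mu (j1 psi y)) =
   (fun y => dqd L i mu (j1 (fun y => lsubmx (psi y)) y)).
  by move=> mu; apply/funext => y; rewrite (DLr _ _ _ _ hL) pr_j1.
by under eq_bigr => mu _ do rewrite E.
Qed.

Lemma EL_l i x : EL (Ltilde L) psi (lshift n i) x <->
  Jacobi L (fun y => lsubmx (psi y)) (fun y => rsubmx (psi y)) i x.
Proof.
rewrite /EL (DQl _ _ _ _ hL) Fgen_j1.
have E : forall mu, (fun y => dqd (Ltilde L) (lshift n i) mu (j1 psi y)) =
   (fun y => \sum_(j < n) dq (dqd L i mu) j (j1 (fun y => lsubmx (psi y)) y) * rsubmx (psi y) 0 j +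
     \sum_(j < n) \sum_(g < k) dqd (dqd L i mu) j g (j1 (fun y => lsubmx (psi y)) y) *
        'D_(ek R g) (fun z => rsubmx (psi z) 0 j) y).
  by move=> mu; apply/funext => y; rewrite (DLl _ _ _ _ hL) Fgen_j1.
under eq_bigr => mu _ do rewrite E.
rewrite opprD addrA.
by split => H; exact: H.
Qed.
End EL.

Definition vecidx (m k : nat) (x : 'I_m * 'I_k) : 'I_(m * k) :=
  cast_ord (mxvec_cast m k) (enum_rank x).

Arguments vecidx {m k}.

Lemma unvecK m k (x : 'I_m * 'I_k) : unvec (vecidx x) = x.
Proof. by rewrite /unvec /vecidx cast_ordK enum_rankK. Qed.

Lemma vecidxK m k (a : 'I_(m * k)) : vecidx (unvec a) = a.
Proof. by rewrite /unvec /vecidx enum_valK cast_ordKV. Qed.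

Lemma sum_unvec (R : realType) m k (F : 'I_m * 'I_k -> R) :
  \sum_(a < m * k) F (unvec a) = \sum_(i < m) \sum_(mu < k) F (i, mu).
Proof.
rewrite (reindex (@vecidx m k)) /=; last first.
  by exists (@unvec m k) => x _; [rewrite unvecK | rewrite vecidxK].
under eq_bigr => x _ do rewrite unvecK.
by rewrite pair_big /=; apply: eq_bigr => -[].
Qed.

Lemma unit_ker (R : realType) N (A : 'M[R]_N) : A \in unitmx ->
  forall z : 'rV_N, z *m A = 0 -> z = 0.
Proof. by move=> uA z zA; rewrite -(mulmxK uA z) zA mul0mx. Qed.

Lemma ker_unit (R : realType) N (A : 'M[R]_N) :
  (forall z : 'rV_N, z *m A = 0 -> z = 0) -> A \in unitmx.
Proof.
move=> H; rewrite -row_free_unit -kermx_eq0; apply/eqP/row_matrixP => i.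
rewrite row0; apply: H; by rewrite -row_mul mulmx_ker row0.
Qed.

Arguments pr {R n k}.
Section Reg.
Variables (R : realType) (n k : nat) (L : Jet R k n -> R) (hL : smooth L).
Hypothesis reg : regular L.

Lemma kerH (p : Jet R k n) (W : 'I_n * 'I_k -> R) :
  (forall j nu, \sum_(i < n) \sum_(mu < k) W (i, mu) * dqd (dqd L i mu) j nu p = 0) ->
  forall x, W x = 0.
Proof.
move=> HW x.
pose w : 'rV[R]_(n * k) := \row_a W (unvec a).
have : w *m velHessian L p = 0.
  apply/rowP => b; rewrite !mxE.
  under eq_bigr => a _ do rewrite !mxE.
  rewrite (sum_unvec _ _ _ (fun x => W x * dqd (dqd L x.1 x.2) (unvec b).1 (unvec b).2 p)).
  exact: HW.
move/(unit_ker _ _ _ (reg p)) => w0.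
by have := congr1 (fun M : 'rV[R]_(n * k) => M 0 (vecidx x)) w0; rewrite !mxE unvecK.
Qed.

Lemma reg_tilde : regular (Ltilde L).
Proof.
move=> p; apply: ker_unit => z zM.
pose Z (x : 'I_(n + n) * 'I_k) := z 0 (vecidx x).
have col J nu : \sum_(I < n + n) \sum_(mu < k) Z (I, mu) * dqd (dqd (Ltilde L) I mu) J nu p = 0.
  have H0 : (z *m velHessian (Ltilde L) p) 0 (vecidx (J, nu)) = 0 by rewrite zM mxE.
  
  rewrite mxE in H0; apply: etrans H0.
  
  have E : \sum_(a < (n + n) * k) Z (unvec a) * dqd (dqd (Ltilde L) (unvec a).1 (unvec a).2) J nu p
     = \sum_(I < n + n) \sum_(mu < k) Z (I, mu) * dqd (dqd (Ltilde L) I mu) J nu p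
    := sum_unvec _ _ _ (fun x => Z x * dqd (dqd (Ltilde L) x.1 x.2) J nu p).
  
  rewrite -E.
  
  apply: eq_bigr => a _; rewrite /velHessian mxE unvecK /Z vecidxK.
  
  reflexivity.
  
have zZ : forall a, z 0 a = Z (unvec a) by move=> a; rewrite /Z vecidxK.
clearbody Z.
have Z1 : forall x, Z (lshift n x.1, x.2) = 0.
  apply: (kerH (pr p) (fun x => Z (lshift n x.1, x.2))) => j nu.
  have := col (rshift n j) nu;  rewrite big_split_ord.  rewrite /=.  rewrite [X in _ + X]big1 ?addr0. 
    move=> H0;  apply: etrans H0;  apply: eq_bigr => i _; apply: eq_bigr => mu _.
     rewrite (H_lr _ _ _ _ hL).  reflexivity.
  move=> i _; apply: big1 => mu _.
  by rewrite (H_rr _ _ _ _ hL) mulr0.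
have Z2 : forall x, Z (rshift n x.1, x.2) = 0.
  apply: (kerH (pr p) (fun x => Z (rshift n x.1, x.2))) => j nu.
  have := col (lshift n j) nu; rewrite big_split_ord /= [X in X + _]big1 ?add0r.
    move=> H0; apply: etrans H0; apply: eq_bigr => i _; apply: eq_bigr => mu _.
    by rewrite (H_rl _ _ _ _ hL).
  move=> i _; apply: big1 => mu _.
  by rewrite (Z1 (i, mu)) mul0r.
apply/rowP => a; rewrite mxE zZ; case: (unvec a) => I mu.
rewrite -(splitK I); case: (fintype.split I) => j /=.
  exact: (Z1 (j, mu)).
exact: (Z2 (j, mu)).
Qed.
End Reg.

Theorem mainTheorem1 (R : realType) (n k : nat) (hk : (0 < k)%N)
  (L : Jet R k n -> R) (hL : smooth L) :
  (forall (U : set 'rV[R]_k) (psi : 'rV[R]_k -> 'rV[R]_(n + n)),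
      open U -> smooth_on U psi ->
      ((forall x, U x -> forall i : 'I_n,
           EL (Ltilde L) psi (lshift n i) x /\ EL (Ltilde L) psi (rshift n i) x)
       <->
       (forall x, U x -> forall i : 'I_n,
           Jacobi L (fun y => lsubmx (psi y)) (fun y => rsubmx (psi y)) i x
           /\ EL L (fun y => lsubmx (psi y)) i x)))
  /\ (regular L -> regular (Ltilde L)).
Proof.
split.
  move=> U psi _ _; split => H x Ux i; have [H1 H2] := H x Ux i; split.
  - exact: (EL_l _ _ _ _ hL psi i x).1.
  - exact: (EL_r _ _ _ _ hL psi i x).1.
  - exact: (EL_l _ _ _ _ hL psi i x).2.
  - exact: (EL_r _ _ _ _ hL psi i x).2.
exact: (reg_tilde _ _ _ _ hL).
Qed.
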